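(* In the setting below, the measure $\mu_P^{(0)}$ is independent of the choice of the disintegrations $\gamma_p^\bullet$ and $\gamma_q^\bullet$: if $\widetilde{\gamma}_p^\bullet,\widetilde{\gamma}_q^\bullet$ is another such pair and $\widetilde{\mu}_P^{(0)}$ the corresponding measure, then $\widetilde{\mu}_P^{(0)}=\mu_P^{(0)}$.
   Context: Setting: $(S,\lambda_S^\bullet,\mu_S^{(0)})$, $(G,\lambda_G^\bullet,\mu_G^{(0)})$, $(T,\lambda_T^\bullet,\mu_T^{(0)})$ are Haar groupoids, i.e. second countable, locally compact, Hausdorff topological groupoids with continuous left Haar systems (systems of measures $\lambda^u$ concentrated on $r^{-1}(u)$, continuous in $u$ against continuous compactly supported $f\ge0$, left invariant $\lambda^{d(x)}(E)=\lambda^{r(x)}(x(E\cap r^{-1}(d(x))))$, positive on open sets meeting $r^{-1}(u)$) and non-zero quasi-invariant Radon measures $\mu^{(0)}$ on the unit spaces (the induced measure $\mu(E)=\int\lambda^u(E)d\mu^{(0)}(u)$ is equivalent to $E\mapsto\mu(E^{-1})$). $p:S\to G$, $q:T\to G$ are homomorphisms of Haar groupoids (continuous homomorphisms preserving the class of the induced measures). $\mu_G$ is the induced measure of $G$. $P^{(0)}=\{(s,g,t)\in S^{(0)}\times G\times T^{(0)}: r_G(g)=p(s),\ d_G(g)=q(t)\}$. A Borel system of measures (BSM) on a Borel map $\pi:X\to Y$ is a family $\{\gamma^y\}$ of positive Borel measures on $X$, $\gamma^y$ concentrated on $\pi^{-1}(y)$, $y\mapsto\gamma^y(E)$ Borel;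 locally finite (resp. locally bounded) if every point has a neighborhood $U$ with $\gamma^y(U)<\infty$ for all $y$ (resp. $\gamma^y(U)<C$ for all $y$, some constant $C$); a disintegration of $\mu$ w.r.t. $\nu$ if $\mu(E)=\int\gamma^y(E)d\nu(y)$. An admissible pair consists of a locally finite, locally bounded BSM $\gamma_p^\bullet$ on $p|_{S^{(0)}}:S^{(0)}\to G^{(0)}$ disintegrating $\mu_S^{(0)}$ w.r.t. $\mu_G^{(0)}$ and a locally finite, locally bounded BSM $\gamma_q^\bullet$ on $q|_{T^{(0)}}:T^{(0)}\to G^{(0)}$ disintegrating $\mu_T^{(0)}$ w.r.t. $\mu_G^{(0)}$. For such a pair, $\eta^x=\gamma_p^{r_G(x)}\times\delta_x\times\gamma_q^{d_G(x)}$ ($x\in G$) as a measure on $P^{(0)}$, and $\mu_P^{(0)}(B)=\int_G\eta^x(B)\,d\mu_G(x)$ for Borel $B\subseteq P^{(0)}$. *)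

(* Defs.v *)
From HB Require Import structures.
From mathcomp Require Import all_boot all_algebra.
From mathcomp Require Import all_classical all_reals all_analysis.
From mathcomp Require Import measurable_realfun lebesgue_measure.
Import GRing.Theory Num.Theory.

Set Implicit Arguments.
Unset Strict Implicit.
Unset Printing Implicit Defensive.

Local Open Scope classical_set_scope.
Local Open Scope ring_scope.

Definition Borel (X : ptopologicalType) := g_sigma_algebraType (@open X).

Record groupoid_ops (X : Type) := GroupoidOps {
  gunit : set X;
  grng  : X -> X;
  gsrc  : X -> X;
  gmul  : X -> X -> X;    (* composition, defined when d x = r y *)
  ginv  : X -> X }.

Definition is_groupoid (X : Type) (g : groupoid_ops X) : Prop :=
  [/\ (forall x, gunit g (grng g x) /\ gunit g (gsrc g x)) /\
      (forall u, gunit g u -> grng g u = u /\ gsrc g u = u),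
      (forall x y, gsrc g x = grng g y ->
         grng g (gmul g x y) = grng g x /\ gsrc g (gmul g x y) = gsrc g y),
      (forall x y z, gsrc g x = grng g y -> gsrc g y = grng g z ->
         gmul g (gmul g x y) z = gmul g x (gmul g y z)),
      (forall x, gmul g (grng g x) x = x /\ gmul g x (gsrc g x) = x) &
      (forall x, [/\ grng g (ginv g x) = gsrc g x, gsrc g (ginv g x) = grng g x,
                     gmul g x (ginv g x) = grng g x &
                     gmul g (ginv g x) x = gsrc g x])].

Definition composable (X : Type) (g : groupoid_ops X) : set (X * X) :=
  [set z | gsrc g z.1 = grng g z.2].

Definition is_lch_topological_groupoid (X : ptopologicalType) (g : groupoid_ops X) : Prop :=
  [/\ is_groupoid g /\
      {within composable g, continuous (fun z : X * X => gmul g z.1 z.2)},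
      continuous (ginv g),
      @second_countable X,
      locally_compact [set: X] &
      hausdorff_space X].

Definition Cc_nonneg (R : realType) (X : ptopologicalType) (f : X -> R) : Prop :=
  [/\ continuous (f : X -> R^o), (forall x, 0 <= f x) &
      compact (closure [set x | f x != 0])].

Definition is_left_haar_system (R : realType) (X : ptopologicalType)
    (g : groupoid_ops X) (lam : X -> {measure set (Borel X) -> \bar R}) : Prop :=
  [/\
      (forall u, gunit g u -> lam u (~` (grng g @^-1` [set u])) = 0%E),
      (forall f : X -> R, Cc_nonneg f ->
         (forall u, gunit g u -> (\int[lam u]_x (f x)%:E < +oo)%E) /\
         {within gunit g, continuous ((fun u => fine (\int[lam u]_x (f x)%:E)) : X -> R^o)}),
      (forall (x : X) (E : set (Borel X)), measurable E ->
         lam (gsrc g x) E =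
         lam (grng g x) (gmul g x @` (E `&` grng g @^-1` [set gsrc g x]))) &
      (forall u (U : set X), gunit g u -> open U ->
         U `&` grng g @^-1` [set u] !=set0 -> (0 < lam u U)%E)].

Definition induced_measure (R : realType) (X : ptopologicalType)
    (g : groupoid_ops X) (lam : X -> {measure set (Borel X) -> \bar R})
    (mu0 : {measure set (Borel X) -> \bar R}) : set X -> \bar R :=
  fun E => (\int[mu0]_(u in gunit g) lam u E)%E.

(* Haar groupoid (G, lam, mu0); mu0 is a measure on G^(0), represented as a
   Borel measure on G concentrated on the (closed) unit space G^(0). *)
Definition is_haar_groupoid (R : realType) (X : ptopologicalType)
    (g : groupoid_ops X) (lam : X -> {measure set (Borel X) -> \bar R})
    (mu0 : {measure set (Borel X) -> \bar R}) : Prop :=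
  [/\ is_lch_topological_groupoid g /\
      is_left_haar_system g lam,
      mu0 (~` gunit g) = 0%E,
      (* Radon: locally finite on G^(0) *)
      (forall u, gunit g u -> exists U : set X,
          [/\ open U, U u & (mu0 U < +oo)%E]),
      mu0 [set: X] != 0%E &
      (forall E : set (Borel X), measurable E ->
         induced_measure g lam mu0 E = 0%E <->
         induced_measure g lam mu0 (ginv g @^-1` E) = 0%E)].

Definition is_haar_hom (R : realType) (S G : ptopologicalType)
    (gS : groupoid_ops S) (lamS : S -> {measure set (Borel S) -> \bar R})
    (muS0 : {measure set (Borel S) -> \bar R})
    (gG : groupoid_ops G) (lamG : G -> {measure set (Borel G) -> \bar R})
    (muG0 : {measure set (Borel G) -> \bar R}) (p : S -> G) : Prop :=
  [/\ continuous p,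
      (forall x y, gsrc gS x = grng gS y ->
         p (gmul gS x y) = gmul gG (p x) (p y)) &
      (forall E : set (Borel G), measurable E ->
         induced_measure gS lamS muS0 (p @^-1` E) = 0%E <->
         induced_measure gG lamG muG0 E = 0%E)].

Definition is_lflb_bsm (R : realType) (S G : ptopologicalType)
    (gS : groupoid_ops S) (gG : groupoid_ops G) (p : S -> G)
    (gam : G -> {measure set (Borel S) -> \bar R}) : Prop :=
  [/\
      (forall y, gunit gG y -> gam y (~` (gunit gS `&` p @^-1` [set y])) = 0%E),
      (forall E : set (Borel S), measurable E ->
         measurable_fun (gunit gG : set (Borel G)) (fun y : Borel G => gam y E)),
      (forall s, gunit gS s -> exists U : set S,
          [/\ open U, U s & forall y, gunit gG y -> (gam y U < +oo)%E]) &
      (forall s, gunit gS s -> exists U : set S, exists C : R,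
          [/\ open U, U s & forall y, gunit gG y -> (gam y U < C%:E)%E])].

Definition is_disintegration (R : realType) (S G : ptopologicalType)
    (gG : groupoid_ops G) (gam : G -> {measure set (Borel S) -> \bar R})
    (muS0 : {measure set (Borel S) -> \bar R})
    (muG0 : {measure set (Borel G) -> \bar R}) : Prop :=
  forall E : set (Borel S), measurable E ->
    muS0 E = (\int[muG0]_(y in gunit gG) gam y E)%E.

Definition admissible_pair (R : realType) (S G T : ptopologicalType)
    (gS : groupoid_ops S) (muS0 : {measure set (Borel S) -> \bar R})
    (gG : groupoid_ops G) (muG0 : {measure set (Borel G) -> \bar R})
    (gT : groupoid_ops T) (muT0 : {measure set (Borel T) -> \bar R})
    (p : S -> G) (q : T -> G)
    (gp : G -> {measure set (Borel S) -> \bar R})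
    (gq : G -> {measure set (Borel T) -> \bar R}) : Prop :=
  [/\ is_lflb_bsm gS gG p gp, is_disintegration gG gp muS0 muG0,
      is_lflb_bsm gT gG q gq & is_disintegration gG gq muT0 muG0].

Definition P0 (S G T : Type) (gS : groupoid_ops S) (gG : groupoid_ops G)
    (gT : groupoid_ops T) (p : S -> G) (q : T -> G) : set ((S * G) * T) :=
  [set z | [/\ gunit gS z.1.1, gunit gT z.2,
              grng gG z.1.2 = p z.1.1 & gsrc gG z.1.2 = q z.2]].

Definition SGT (S G T : ptopologicalType) := ((Borel S * Borel G) * Borel T)%type.

(* eta^x(B) = (gam_p^{r(x)} x delta_x x gam_q^{d(x)})(B), the product measure
   evaluated as an iterated integral *)
Definition eta_meas (R : realType) (S G T : ptopologicalType)
    (gG : groupoid_ops G)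
    (gp : G -> {measure set (Borel S) -> \bar R})
    (gq : G -> {measure set (Borel T) -> \bar R})
    (x : G) (B : set (SGT S G T)) : \bar R :=
  (\int[gp (grng gG x)]_s \int[gq (gsrc gG x)]_t (\1_B ((s, x), t) : R)%:E)%E.

Definition muP0 (R : realType) (S G T : ptopologicalType)
    (gG : groupoid_ops G) (muG : {measure set (Borel G) -> \bar R})
    (gp : G -> {measure set (Borel S) -> \bar R})
    (gq : G -> {measure set (Borel T) -> \bar R})
    (B : set (SGT S G T)) : \bar R :=
  (\int[muG]_x eta_meas gG gp gq x B)%E.

(* Main.v *)
Require Import Defs.
From HB Require Import structures.
From mathcomp Require Import all_boot all_algebra.
From mathcomp Require Import all_classical all_reals all_analysis.
From mathcomp Require Import measurable_realfun lebesgue_measure.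
Import mathcomp.order.order.Order.TTheory GRing.Theory Num.Theory.
Local Open Scope classical_set_scope.
Local Open Scope ring_scope.


Lemma rng_cont (X : ptopologicalType) (g : groupoid_ops X) :
  is_lch_topological_groupoid g -> continuous (grng g).
Proof.
case=> -[[[_ _] _ _ _ Hi] Hmul] Hinv _ _ _ x.
have e : grng g = (fun z : X * X => gmul g z.1 z.2) \o (fun y => (y, ginv g y)).
  by apply: funext => y /=; case: (Hi y).
rewrite e.
have cx : composable g (x, ginv g x) by rewrite /composable /=; case: (Hi x).
move/subspace_continuousP : Hmul => /(_ _ cx) Hm.
apply: (cvg_comp _ _ _ Hm).
have hc : (fun y => (y, ginv g y)) @ nbhs x --> (x, ginv g x).
  by apply: cvg_pair => //; exact: Hinv.
move=> P HP.
have hcomp : forall y, composable g (y, ginv g y).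
  by move=> y; rewrite /composable /=; case: (Hi y).
exact: (filterS (fun y Qy => Qy (hcomp y)) (hc _ HP)).
Qed.

Lemma closed_fix (X : topologicalType) (f : X -> X) :
  hausdorff_space X -> continuous f -> closed [set x | f x = x].
Proof.
move=> hX cf x clx; apply: hX => A B nA nB.
have : nbhs x (f @^-1` A `&` B) by apply: filterI => //; exact: cf.
move=> /clx [y [fy [Ay By]]]; exists y; split => //; by rewrite -fy.
Qed.

Lemma unit_fix (X : Type) (g : groupoid_ops X) : is_groupoid g ->
  gunit g = [set x | grng g x = x].
Proof.
case=> -[Hu1 Hu2] _ _ _ _; apply/seteqP; split => x /=.
  by move=> /Hu2 [].
by move=> <-; case: (Hu1 x).
Qed.

Lemma unit_closed (X : ptopologicalType) (g : groupoid_ops X) :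
  is_lch_topological_groupoid g -> closed (gunit g).
Proof.
move=> H; have Hr := rng_cont _ _ H.
case: H => -[Hg _] _ _ _ hX.
by rewrite (unit_fix _ _ Hg); exact: closed_fix.
Qed.

Lemma open_meas (X : ptopologicalType) (A : set X) : open A ->
  measurable (A : set (Borel X)).
Proof. by move=> oA; exact: sub_sigma_algebra. Qed.

Lemma closed_meas (X : ptopologicalType) (A : set X) : closed A ->
  measurable (A : set (Borel X)).
Proof.
move=> cA; rewrite -(setCK A); apply: measurableC; apply: open_meas.
exact: closed_openC.
Qed.

Lemma cont_meas (X Y : ptopologicalType) (f : X -> Y) : continuous f ->
  measurable_fun (setT : set (Borel X)) (f : Borel X -> Borel Y).
Proof.
move=> cf; apply: (@measurability _ _ (Borel X) (Borel Y) setT f (@open Y)) => //.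
move=> _ [U oU <-]; rewrite setTI; apply: open_meas.
by move: cf => /continuousP; apply.
Qed.

Lemma set1_meas (X : ptopologicalType) (x : X) : hausdorff_space X ->
  measurable ([set x] : set (Borel X)).
Proof. by move=> hX; apply: closed_meas; exact/accessible_closed_set1/hausdorff_accessible. Qed.

Section nm.
Local Open Scope ereal_scope.
Context d (T : measurableType d) (R : realType) (mu : {measure set T -> \bar R}).
Import HBNNSimple.

Let sup_le {N : set T} (mN : measurable N) (N0 : mu N = 0) (F1 F2 : T -> \bar R) :
  (forall x, ~ N x -> F1 x = F2 x) -> (forall x, 0 <= F2 x) ->
  ereal_sup [set sintegral mu h | h in [set h : {nnsfun T >-> R} | forall x, (h x)%:E <= F1 x]]
  <= ereal_sup [set sintegral mu h | h in [set h : {nnsfun T >-> R} | forall x, (h x)%:E <= F2 x]].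
Proof.
move=> F12 F20; apply: ge_ereal_sup => _ [h hF1 <-].
apply: le_ereal_sup_tmp.
exists (sintegral mu (proj_nnsfun h (measurableC mN))); last first.
  rewrite -!integralT_nnsfun le_eqVlt; apply/orP; left; apply/eqP.
  apply: ae_eq_integral => //.
  - by apply/measurable_EFinP; exact: measurable_funPT.
  - by apply/measurable_EFinP; exact: measurable_funPT.
  - exists N; split => // x /= H; apply: contrapT => Nx; apply: H => _.
    by rewrite /= mindicE /= mem_set // mulr1.
exists (proj_nnsfun h (measurableC mN)) => // x.
rewrite /= mindicE; have [Nx|Nx] := pselect (N x).
  by rewrite memNset // ?mulr0 //.
by rewrite mem_set // mulr1 -F12.
Qed.

Lemma ae_integral_nm (N : set T) (f g : T -> \bar R) : measurable N -> mu N = 0 ->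
  (forall x, ~ N x -> f x = g x) -> \int[mu]_x f x = \int[mu]_x g x.
Proof.
move=> mN N0 fg; rewrite /integral; congr (_ - _); apply/eqP; rewrite eq_le;
  apply/andP; split; apply: (sup_le mN N0) => // x;
  rewrite ?patch_setT /= ?funepos_ge0 ?funeneg_ge0 // => Nx;
  by rewrite ?funeposE ?funenegE /= fg.
Qed.
End nm.

Lemma enum_base (X : ptopologicalType) : @second_countable X ->
  exists e : nat -> set X, (forall n, open (e n)) /\
    forall (U : set X) x, open U -> U x -> exists n, e n x /\ e n `<=` U.
Proof.
case=> B cB [Bo Bb].
have [f finj] := countable_injP _ cB.
pose e n := match pselect (exists b, B b /\ f b = n) with
  | left H => projT1 (cid H) | right _ => set0 end.
have eB b : B b -> e (f b) = b.
  move=> Bb'; rewrite /e; case: pselect => [H|]; last by case; exists b.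
  case: (cid H) => b' [Bb'' fb] /=; apply: finj => //; exact: mem_set.
exists e; split.
  move=> n; rewrite /e; case: pselect => [H|_]; last exact: open0.
  by case: (cid H) => b' [Bb'' fb] /=; exact: Bo.
move=> U x oU Ux.
have : nbhs x U by apply: open_nbhs_nbhs.
move=> /(Bb x) [V [BV Vx] VU].
by exists (f V); rewrite eB.
Qed.

Definition Ifold {X : Type} (e : nat -> set X) (l : seq nat) : set X :=
  foldr (fun n A => e n `&` A) setT l.

Lemma Ifold_cat {X : Type} (e : nat -> set X) l1 l2 :
  Ifold e (l1 ++ l2) = Ifold e l1 `&` Ifold e l2.
Proof.
elim: l1 => [|n l IH] /=; first by rewrite setTI.
by rewrite /Ifold /= -/(Ifold e l) -/(Ifold e (l ++ l2)) IH setIA.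
Qed.

Lemma Ifold_open {X : ptopologicalType} (e : nat -> set X) l :
  (forall n, open (e n)) -> open (Ifold e l).
Proof.
move=> eo; elim: l => [|n l IH] /=; first exact: openT.
exact: openI.
Qed.

Lemma pi_gen {X : ptopologicalType} (e : nat -> set X) :
  (forall n, open (e n)) ->
  (forall (U : set X) x, open U -> U x -> exists n, e n x /\ e n `<=` U) ->
  @measurable _ (Borel X) = <<s range (Ifold e) >>.
Proof.
move=> eo eb; apply/seteqP; split.
  apply: smallest_sub; first exact: smallest_sigma_algebra.
  move=> U oU.
  have -> : U = \bigcup_n (if pselect (e n `<=` U) is left _ then e n else set0).
    apply/seteqP; split.
      move=> x Ux; have [n [enx enU]] := eb U x oU Ux.
      by exists n => //; case: pselect.
    by move=> x [n _]; case: pselect => // H /H.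
  apply: sigma_algebra_bigcup => n; case: pselect => _; last exact: sigma_algebra0.
  apply: sub_sigma_algebra; exists [:: n] => //=.
  by rewrite /Ifold /= setIT.
apply: smallest_sub; first exact: sigma_algebra_measurable.
move=> _ [l _ <-]; apply: open_meas; exact: Ifold_open.
Qed.

Lemma null_diff d (T : measurableType d) (R : realType)
  (mu : {measure set T -> \bar R}) (A X Z : set T) :
  measurable A -> measurable X -> measurable Z -> mu Z = 0%E ->
  A `\` X `<=` Z -> mu A = mu (A `&` X).
Proof.
move=> mA mX mZ Z0 AXZ.
rewrite (measureDI mu mA mX) (subset_measure0 _ mZ AXZ Z0) ?add0e //.
exact: measurableD.
Qed.

Section uniq.
Local Open Scope ereal_scope.
Context (R : realType) (S G : ptopologicalType) (gS : groupoid_ops S)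
  (gG : groupoid_ops G) (p : S -> G)
  (muS0 : {measure set (Borel S) -> \bar R})
  (mu0 : {measure set (Borel G) -> \bar R}).
Hypotheses (hS : is_lch_topological_groupoid gS)
  (hG : is_lch_topological_groupoid gG) (pc : continuous p).

Local Notation G0 := (gunit gG : set (Borel G)).

Let mS0 : measurable (gunit gS : set (Borel S)).
Proof. exact: (closed_meas _ _ (unit_closed _ _ hS)). Qed.
Let mG0 : measurable (gunit gG : set (Borel G)).
Proof. exact: (closed_meas _ _ (unit_closed _ _ hG)). Qed.
Let hGh : hausdorff_space G. Proof. by case: hG. Qed.

Let mpre {E : set (Borel G)} : measurable E ->
  measurable (p @^-1` E : set (Borel S)).
Proof. by move=> mE; rewrite -[X in measurable X]setTI; exact: cont_meas. Qed.

Let mK y : measurable (gunit gS `&` p @^-1` [set y] : set (Borel S)).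
Proof. by apply: measurableI => //; apply: mpre; exact: set1_meas. Qed.

Let mnK y : measurable (~` (gunit gS `&` p @^-1` [set y]) : set (Borel S)).
Proof. exact: measurableC. Qed.

Let step_B (gam : G -> {measure set (Borel S) -> \bar R})
  (Hb : is_lflb_bsm gS gG p gam) (Hd : is_disintegration gG gam muS0 mu0)
  (A : set (Borel S)) (E : set (Borel G)) :
  measurable A -> measurable E -> E `<=` gunit gG ->
  muS0 (A `&` p @^-1` E) = \int[mu0]_(y in E) gam y A.
Proof.
case: Hb => Hc _ _ _ mA mE EG.
rewrite Hd; last by apply: measurableI => //; exact: mpre.
have -> : \int[mu0]_(y in E) gam y A = \int[mu0]_(y in gunit gG `&` E) gam y A.
  by rewrite setIidr.
rewrite integral_mkcondr.
apply: eq_integral => y /[1!inE] G0y; rewrite patchE; case: ifPn => [/set_mem Ey|Ey].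
  rewrite [RHS](null_diff _ _ _ (gam y) _ _ _ mA (mpre mE) (mnK y) (Hc y G0y)) //.
  by move=> s [As /= pE] [_ /= py]; apply: pE; rewrite py.
apply: (subset_measure0 _ (mnK y)) => //; first by apply: measurableI => //; exact: mpre.
move=> s [As /= pE] [_ /= py]; move: Ey; rewrite -py => /negP; apply.
exact: mem_set.
exact: Hc.
Qed.

Let ae_piece (gam gam' : G -> {measure set (Borel S) -> \bar R})
  (Hb : is_lflb_bsm gS gG p gam) (Hd : is_disintegration gG gam muS0 mu0)
  (Hb' : is_lflb_bsm gS gG p gam') (Hd' : is_disintegration gG gam' muS0 mu0)
  (A : set (Borel S)) (V : set (Borel G)) (C : R) :
  measurable A -> measurable V -> mu0 V < +oo ->
  (forall y, gunit gG y -> gam y A < C%:E /\ gam' y A < C%:E) ->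
  ae_eq mu0 (G0 `&` V) (fun y => gam y A) (fun y => gam' y A).
Proof.
move=> mA mV Vfin Cb.
have mD : measurable (G0 `&` V) by exact: measurableI.
have mf : measurable_fun (G0 `&` V) (fun y => gam y A).
  apply: (measurable_funS mG0 (@subIsetl _ _ _)); case: Hb => _ Hm _ _; exact: Hm.
have mf' : measurable_fun (G0 `&` V) (fun y => gam' y A).
  apply: (measurable_funS mG0 (@subIsetl _ _ _)); case: Hb' => _ Hm _ _; exact: Hm.
apply: integral_ae_eq => //.
  apply/integrableP; split => //.
  apply: (le_lt_trans (integral_le_bound (Num.max C 0)%:E mD mf _ _)).
  - by rewrite lee_fin le_max lexx orbT.
  - apply: aeW => y [G0y _]; rewrite gee0_abs //.
    apply: (le_trans (ltW (Cb y G0y).1)); by rewrite lee_fin le_max lexx.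
  - apply: lte_mul_pinfty => //; first by rewrite lee_fin le_max lexx orbT.
    apply: le_lt_trans Vfin; apply: le_measure; rewrite ?inE //.
move=> E ED mE; rewrite -!step_B //; by move=> y /ED [].
Qed.

Lemma disint_unique (gam gam' : G -> {measure set (Borel S) -> \bar R})
  (Hb : is_lflb_bsm gS gG p gam) (Hd : is_disintegration gG gam muS0 mu0)
  (Hb' : is_lflb_bsm gS gG p gam') (Hd' : is_disintegration gG gam' muS0 mu0)
  (H0 : forall u, gunit gG u -> exists U : set G, [/\ open U, U u & mu0 U < +oo]) :
  exists N : set (Borel G), [/\ measurable N, mu0 N = 0 &
    forall y, gunit gG y -> ~ N y -> forall A : set (Borel S), measurable A ->
      gam y A = gam' y A].
Proof.
have scG : @second_countable G by case: hG.
have scS : @second_countable S by case: hS.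
have [eG [eGo eGb]] := enum_base _ scG.
have [eS [eSo eSb]] := enum_base _ scS.
pose V k : set (Borel G) := if pselect (mu0 (eG k) < +oo) is left _ then eG k else set0.
have mV k : measurable (V k).
  by rewrite /V; case: pselect => _ //; exact: open_meas.
have Vfin k : mu0 (V k) < +oo.
  by rewrite /V; case: pselect => // _; rewrite measure0.
have Vcov : G0 `<=` \bigcup_k V k.
  move=> u G0u; have [U [oU Uu Ufin]] := H0 u G0u.
  have [k [eku ekU]] := eGb U u oU Uu.
  exists k => //; rewrite /V; case: pselect => // -[].
  apply: le_lt_trans Ufin; apply: le_measure; rewrite ?inE //; exact: open_meas.
pose bnd (A : set (Borel S)) := exists C : R, forall y, gunit gG y ->
  gam y A < C%:E /\ gam' y A < C%:E.
pose W i : set (Borel S) := if pselect (bnd (eS i)) is left _ then eS i else set0.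
have mW i : measurable (W i).
  by rewrite /W; case: pselect => _ //; exact: open_meas.
have Wb i : bnd (W i).
  rewrite /W; case: pselect => // _; exists 1%R => y _.
  by rewrite !measure0 !lte_fin ltr01.
have Wcov : (gunit gS : set (Borel S)) `<=` \bigcup_i W i.
  move=> s S0s.
  case: Hb => _ _ _ /(_ s S0s) [U [C [oU Us UC]]].
  case: Hb' => _ _ _ /(_ s S0s) [U' [C' [oU' Us' UC']]].
  have [i [eis eiU]] := eSb (U `&` U') s (openI oU oU') (conj Us Us').
  exists i => //; rewrite /W; case: pselect => // -[].
  exists (Num.max C C') => y G0y; split.
    have h1 : gam y (eS i) <= gam y U.
      apply: le_measure; rewrite ?inE //; try exact: open_meas.
      by move=> x /eiU [].
    apply: le_lt_trans h1 (lt_le_trans (UC y G0y) _).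
    by rewrite lee_fin le_max lexx.
  have h1 : gam' y (eS i) <= gam' y U'.
    apply: le_measure; rewrite ?inE //; try exact: open_meas.
    by move=> x /eiU [].
  apply: le_lt_trans h1 (lt_le_trans (UC' y G0y) _).
  by rewrite lee_fin le_max lexx orbT.
pose P i n y := gam y (Ifold eS (odflt [::] (unpickle n)) `&` W i) =
  gam' y (Ifold eS (odflt [::] (unpickle n)) `&` W i).
have mI l : measurable (Ifold eS l : set (Borel S)).
  by apply: open_meas; apply: Ifold_open.
have aeP : \forall y \ae mu0, forall i n, G0 y -> P i n y.
  apply: ae_foralln => i; apply: ae_foralln => n.
  have : \forall y \ae mu0, forall k, (G0 `&` V k) y -> P i n y.
    apply: ae_foralln => k; have [C HC] := Wb i.
    apply: (ae_piece _ _ Hb Hd Hb' Hd' _ _ C _ (mV k) (Vfin k)).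
      by apply: measurableI.
    move=> y G0y; have [h1 h2] := HC y G0y; split.
      apply: le_lt_trans h1; apply: le_measure; rewrite ?inE //.
      exact: measurableI.
    apply: le_lt_trans h2; apply: le_measure; rewrite ?inE //.
    exact: measurableI.
  apply: filterS => y Hy G0y; have [k _ Vky] := Vcov y G0y.
  exact: Hy k (conj G0y Vky).
case: aeP => N [mN N0 NP].
exists N; split => // y G0y Ny A mA.
have Py i n : P i n y.
  apply: contrapT => nP; apply: Ny; apply: NP => /= H; apply: nP; exact: H i n G0y.
have eqW i B : measurable B -> gam y (B `&` W i) = gam' y (B `&` W i).
  move=> mB; have [C HC] := Wb i.
  have := @measure_unique _ R (Borel S) (range (Ifold eS)) (fun _ => setT)
    (pi_gen eS eSo eSb) _ _ _ (mrestr (gam y) (mW i)) (mrestr (gam' y) (mW i)) _ _ B mB.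
  apply.
  - by move=> _ _ [l1 _ <-] [l2 _ <-]; exists (l1 ++ l2) => //; exact: Ifold_cat.
  - by move=> _; exists [::].
  - by apply/seteqP; split => // x _; exists 0%N.
  - move=> _ [l _ <-]; rewrite /mrestr.
    have El : odflt [::] (unpickle (pickle l)) = l by rewrite pickleK.
    by have := Py i (pickle l); rewrite /P El.
  - move=> _; change (gam y (setT `&` W i) < +oo); rewrite setTI; exact: lt_trans (HC y G0y).1 (ltry _).
have mU : measurable (\bigcup_i W i) by exact: bigcup_measurable.
have sub : A `\` \bigcup_i W i `<=` ~` (gunit gS `&` p @^-1` [set y]).
  by move=> s [As nW] [S0s _]; apply: nW; exact: Wcov.
case: Hb => Hc _ _ _; case: Hb' => Hc' _ _ _.
rewrite (null_diff _ _ _ (gam y) _ _ _ mA mU (mnK y) (Hc y G0y) sub).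
rewrite (null_diff _ _ _ (gam' y) _ _ _ mA mU (mnK y) (Hc' y G0y) sub).
rewrite seqDU_bigcup_eq setI_bigcupr !measure_bigcup //; first last.
- by apply: trivIset_setIl; exact: trivIset_seqDU.
- by move=> n _; apply: measurableI => //; exact: seqDU_measurable.
- by apply: trivIset_setIl; exact: trivIset_seqDU.
- by move=> n _; apply: measurableI => //; exact: seqDU_measurable.
apply: eq_eseriesr => n _.
have e : A `&` seqDU W n = (A `&` seqDU W n) `&` W n.
  by rewrite [RHS]setIidl // => s [_ h]; exact: subset_seqDU h.
rewrite e; apply: eqW; apply: measurableI => //; exact: seqDU_measurable.
Qed.

End uniq.

Theorem proposition5p7 (R : realType) (S G T : ptopologicalType)
    (gS : groupoid_ops S) (lamS : S -> {measure set (Borel S) -> \bar R})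
    (muS0 : {measure set (Borel S) -> \bar R})
    (gG : groupoid_ops G) (lamG : G -> {measure set (Borel G) -> \bar R})
    (muG0 : {measure set (Borel G) -> \bar R})
    (gT : groupoid_ops T) (lamT : T -> {measure set (Borel T) -> \bar R})
    (muT0 : {measure set (Borel T) -> \bar R})
    (HS : is_haar_groupoid gS lamS muS0)
    (HG : is_haar_groupoid gG lamG muG0)
    (HT : is_haar_groupoid gT lamT muT0)
    (p : S -> G) (q : T -> G)
    (Hp : is_haar_hom gS lamS muS0 gG lamG muG0 p)
    (Hq : is_haar_hom gT lamT muT0 gG lamG muG0 q)
    (muG : {measure set (Borel G) -> \bar R})
    (HmuG : forall E : set (Borel G), measurable E ->
              muG E = induced_measure gG lamG muG0 E)
    (gp gp' : G -> {measure set (Borel S) -> \bar R})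
    (gq gq' : G -> {measure set (Borel T) -> \bar R})
    (Hadm : admissible_pair gS muS0 gG muG0 gT muT0 p q gp gq)
    (Hadm' : admissible_pair gS muS0 gG muG0 gT muT0 p q gp' gq')
    (B : set (SGT S G T)) (mB : measurable B)
    (BP : B `<=` P0 gS gG gT p q) :
  muP0 gG muG gp' gq' B = muP0 gG muG gp gq B.
Proof.
case: HG => -[hG hlam] _ H0 _ Hqi.
case: HS => -[hS _] _ _ _ _.
case: HT => -[hT _] _ _ _ _.
case: Hp => pc _ _; case: Hq => qc _ _.
case: Hadm => Hbp Hdp Hbq Hdq.
case: Hadm' => Hbp' Hdp' Hbq' Hdq'.
have [NS [mNS NS0 HNS]] := @disint_unique _ _ _ _ _ _ _ _ hS hG pc _ _ Hbp Hdp Hbp' Hdp' H0.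
have [NT [mNT NT0 HNT]] := @disint_unique _ _ _ _ _ _ _ _ hT hG qc _ _ Hbq Hdq Hbq' Hdq' H0.
pose N := NS `|` NT.
have mN : measurable N by exact: measurableU.
have N0 : muG0 N = 0%E by rewrite /N measureU0 //.
have hgG : is_groupoid gG by case: hG => -[].
have [[Hu1 Hu2] _ _ _ Hi] := hgG.
have hr := rng_cont _ _ hG.
have hinv : continuous (ginv gG) by case: hG.
have hGh : hausdorff_space G by case: hG.
have mrN : measurable (grng gG @^-1` N : set (Borel G)).
  by rewrite -[X in measurable X]setTI; exact: cont_meas.
have ginv_pre : ginv gG @^-1` (grng gG @^-1` N) = gsrc gG @^-1` N.
  by apply/seteqP; split => x /=; case: (Hi x) => -> _ _ _.
have mdN : measurable (gsrc gG @^-1` N : set (Borel G)).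
  by rewrite -ginv_pre -[X in measurable X]setTI; exact: cont_meas.
case: hlam => Hconc _ _ _.
have ind0 : induced_measure gG lamG muG0 (grng gG @^-1` N) = 0%E.
  rewrite /induced_measure integral_mkcond.
  rewrite (@ae_integral_nm _ _ _ muG0 N _ (cst 0%E) mN N0) ?integral0 // => u Nu.
  rewrite patchE; case: ifPn => // /set_mem G0u.
  apply: (subset_measure0 _ _ _ (Hconc u G0u)) => //.
  - apply: measurableC; rewrite -[X in measurable X]setTI; apply: cont_meas => //.
    exact: set1_meas.
  - by move=> x /= Nx rxu; apply: Nu; rewrite -rxu.
have ind0' : induced_measure gG lamG muG0 (gsrc gG @^-1` N) = 0%E.
  by rewrite -ginv_pre; apply/(Hqi _ mrN).
pose Z := grng gG @^-1` N `|` gsrc gG @^-1` N.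
have mZ : measurable (Z : set (Borel G)) by exact: measurableU.
have Z0 : muG Z = 0%E.
  by rewrite /Z measureU0 // HmuG.
rewrite /muP0; apply: (@ae_integral_nm _ _ _ muG Z _ _ mZ Z0) => x Zx.
have rx : ~ N (grng gG x) by move=> H; apply: Zx; left.
have dx : ~ N (gsrc gG x) by move=> H; apply: Zx; right.
have [G0r G0d] := Hu1 x.
rewrite /eta_meas (eq_measure_integral (gp (grng gG x))); last first.
  by move=> A mA _; rewrite HNS // => H; apply: rx; left.
apply: eq_integral => s _.
rewrite (eq_measure_integral (gq (gsrc gG x))) //.
by move=> A mA _; rewrite HNT // => H; apply: dx; right.
Qed.
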